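(* Assume the law of excluded middle. Let $\alpha\in\mathrm{ord}$ with $\alpha\neq_{\mathrm{Ord}}\underline 0$. Then either there exists $\beta\in\mathrm{ord}$ with $\alpha=_{\mathrm{Ord}}\mathrm{succ}(\beta)$, or $\alpha$ is the supremum (least upper bound for $\le$) of the ordinals $\gamma\in\mathrm{ord}$ with $\gamma<\alpha$.
   Context: Let $\mathfrak F$ be a set of index sets such that: $\mathbb N$ and each $\mathbb N_k=\{n\in\mathbb N:n<k\}$ ($k\ge 0$) belong to $\mathfrak F$; every finitely enumerated subset of an element of $\mathfrak F$ is isomorphic to an element of $\mathfrak F$; for $J\in\mathfrak F$ the set of finitely enumerated subsets of $J$ is isomorphic to an element of $\mathfrak F$; $\mathfrak F$ is stable under disjoint unions indexed by elements of $\mathfrak F$. A finitely enumerated subset of $A$ is one given by a map $\mathbb N_k\to A$; write $F\subseteq_f I$. The set $\mathrm{ord}$ is inductively generated by $\underline 0$ and, for every family $(\alpha_i)_{i\in I}$ with $I\in\mathfrak F$, $\alpha_i\in\mathrm{ord}$, an element $\mathrm S(\alpha_i)_{i\in I}$; for such $\alpha$, $I_\alpha=I$ and $\alpha_i$ are its definitional subordinals; $I_{\underline 0}=\emptyset$. $\mathrm{succ}(\beta)$ is $\mathrm S$ of the one-element family $(\beta)$. For a finite list $F$ in $I_\alpha$, $\alpha_F$ is the list of the $\alpha_i$, $i\in F$. Relations between an element and a nonempty finite list, by simultaneous induction: $\alpha\le\beta^1,\dots,\beta^m$ means $\alpha_i<\beta^1,\dots,\beta^m$ for all $i\in I_\alpha$;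 $\alpha<\beta^1,\dots,\beta^m$ means there exist $F_1\subseteq_f I_{\beta^1},\dots,F_m\subseteq_f I_{\beta^m}$, not all empty, with $\alpha\le\beta^1_{F_1},\dots,\beta^m_{F_m}$ (concatenated list). $\alpha=_{\mathrm{Ord}}\beta$ means $\alpha\le\beta$ and $\beta\le\alpha$. *)

(* Defs.v *)
From mathcomp Require Import all_boot.
Set Implicit Arguments. Unset Strict Implicit. Unset Printing Implicit Defensive.

(* The set of index sets 𝔉 is modelled as a universe of codes [C : Type]
   with decoding [El : C -> Type]. *)

Definition iso (A B : Type) : Prop :=
  exists (f : A -> B) (g : B -> A), cancel f g /\ cancel g f.

Definition index_family (C : Type) (El : C -> Type)
    (cnat : C) (cfin : nat -> C) : Prop :=
  [/\ iso (El cnat) nat,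
      (forall k, iso (El (cfin k)) 'I_k),
      (forall (c : C) (k : nat) (e : 'I_k -> El c),
          exists c' : C, iso (El c') {x : El c | exists i : 'I_k, e i = x}),
      (* the set of finitely enumerated subsets (enumerations N_k -> J,
         i.e. finite lists) of J ∈ 𝔉 is isomorphic to an element of 𝔉 *)
      (forall c : C, exists c' : C, iso (El c') (seq (El c)))
    &
      (forall (c : C) (d : El c -> C),
          exists c' : C, iso (El c') {i : El c & El (d i)})].

Section Ord.
Variables (C : Type) (El : C -> Type).

Inductive ord : Type :=
  | O0 : ord
  | OS : forall c : C, (El c -> ord) -> ord.

(* [fsub b s]: s is the list b_F of definitional subordinals of b indexed by
   some finitely enumerated subset F ⊆_f I_b. *)
Definition fsub (b : ord) (s : seq ord) : Prop :=
  match b with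
  | O0 => s = [::]
  | OS c f => exists F : seq (El c), s = map f F
  end.

Fixpoint fsubs (L : seq ord) (ss : seq (seq ord)) : Prop :=
  match L, ss with
  | [::], [::] => True
  | b :: L', s :: ss' => fsub b s /\ fsubs L' ss'
  | _, _ => False
  end.

(* α ≤ β^1,...,β^m : every α_i < β^1,...,β^m, where
   γ < β^1,...,β^m : there are F_j ⊆_f I_{β^j}, not all empty, with
   γ ≤ β^1_{F_1},...,β^m_{F_m} (concatenated). *)
Fixpoint ole (a : ord) (L : seq ord) {struct a} : Prop :=
  match a with
  | O0 => True
  | OS c f => forall i : El c,
      exists ss : seq (seq ord),
        [/\ fsubs L ss, flatten ss <> [::] & ole (f i) (flatten ss)]
  end.

Definition olt (a : ord) (L : seq ord) : Prop :=
  exists ss : seq (seq ord),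
    [/\ fsubs L ss, flatten ss <> [::] & ole a (flatten ss)].

Definition oeq (a b : ord) : Prop := ole a [:: b] /\ ole b [:: a].

End Ord.

Arguments O0 {C El}.
Arguments OS {C El} c _.

(* Main.v *)
Require Import Defs.
From mathcomp Require Import all_boot.
From Stdlib Require Import Setoid.
Set Implicit Arguments. Unset Strict Implicit.

Fixpoint inl {T} (y : T) (l : seq T) : Prop :=
  match l with [::] => False | x :: l' => x = y \/ inl y l' end.

Definition ch {C} {El : C -> Type} (L : seq (ord El)) (y : ord El) :=
  exists b, inl b L /\ exists c (f : El c -> ord El) (i : El c), b = OS c f /\ y = f i.

Lemma inl_cat T (y : T) s1 s2 : inl y (s1 ++ s2) <-> inl y s1 \/ inl y s2.
Proof. elim: s1 => [|x s IH] /=; [tauto|]. rewrite IH; tauto. Qed.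

Lemma inl_map T U (f : T -> U) y s : inl y (map f s) -> exists x, y = f x.
Proof. elim: s => [|x s IH] //= [<-|H]; [by exists x|exact: IH]. Qed.

Lemma inl_map2 T U (f : T -> U) x s : inl x s -> inl (f x) (map f s).
Proof. elim: s => [|z s IH] //= [<-|H]; [by left|right; exact: IH]. Qed.

Lemma ne_inl T (s : seq T) : s <> [::] <-> exists y, inl y s.
Proof. case: s => [|x s] /=; split => //; [by case=> ? []| by move=> _; exists x; left]. Qed.

Section S.
Context {C : Type} {El : C -> Type}.
Implicit Types (a b : ord El) (L M : seq (ord El)).

Lemma fsubs_ch L ss y : fsubs L ss -> inl y (flatten ss) -> ch L y.
Proof.
elim: L ss => [|b L IH] [|s ss] //= [Hb Hs]; rewrite inl_cat => -[Hy|Hy].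
- case: b Hb => [/= Hs0|c f /= [F Hs0]]; subst s; first by [].
  case: (inl_map Hy) => i ->. exists (OS c f); split; [by left|]. by exists c, f, i.
- case: (IH _ Hs Hy) => b' [Hb' R]. exists b'; split => //; by right.
Qed.

Lemma fsubs_nil L : exists ss, fsubs L ss /\ flatten ss = [::].
Proof.
elim: L => [|b L [ss [H1 H2]]]; first by exists [::].
exists ([::] :: ss) => /=; split => //; split => //. case: b => //= c f. by exists [::].
Qed.

Lemma fsubs_app L ss1 ss2 : fsubs L ss1 -> fsubs L ss2 ->
  exists ss, fsubs L ss /\ forall y, inl y (flatten ss) <-> inl y (flatten ss1) \/ inl y (flatten ss2).
Proof.
elim: L ss1 ss2 => [|b L IH] [|s1 ss1] [|s2 ss2] //=.
- by move=> _ _; exists [::]; split => // y /=; tauto.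
- move=> [H1 H1'] [H2 H2']. case: (IH _ _ H1' H2') => ss [Hs He].
  exists ((s1 ++ s2) :: ss); split.
  + split => //. case: b H1 H2 => [/= -> ->//|c f /= [F1 ->] [F2 ->]]. exists (F1 ++ F2); by rewrite map_cat.
  + move=> y /=. rewrite !inl_cat He. tauto.
Qed.

Lemma fsubs_single L y : ch L y -> exists ss, fsubs L ss /\ inl y (flatten ss).
Proof.
elim: L => [|b L IH] [b' [Hin [c [f [i [Hb Hy]]]]]] //=. case: Hin => [Hbb|Hin].
- subst. case: (fsubs_nil L) => ss [H1 _]. exists ([:: f i] :: ss) => /=; split.
  + split => //. by exists [:: i].
  + by left.
- case: IH. { exists b'; split => //. by exists c, f, i. }
  move=> ss [H1 H2]. exists ([::] :: ss) => /=; split => //. split => //.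
  case: b => //= c' f'. by exists [::].
Qed.

Lemma build L m : (forall y, inl y m -> ch L y) ->
  exists ss, fsubs L ss /\ (forall y, inl y m -> inl y (flatten ss)).
Proof.
elim: m => [|x m IH] H.
- case: (fsubs_nil L) => ss [H1 _]. by exists ss.
- case: IH. { move=> y Hy; apply: H; by right. }
  move=> ss1 [H1 H1']. case: (fsubs_single (L:=L) (y:=x)). { apply: H; by left. }
  move=> ss2 [H2 H2']. case: (fsubs_app H1 H2) => ss [Hs He].
  exists ss; split => // y /= [<-|Hy]; apply/He; [right => // | left; exact: H1'].
Qed.

Lemma ole_mono a L L' : ole a L -> (forall y, inl y L -> inl y L') -> ole a L'.
Proof.
elim: a L L' => [//|c f IH] L L' /= H Hinc i.
case: (H i) => ss [Hs Hne Hle].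
case: (build (L:=L') (m:=flatten ss)).
{ move=> y Hy. case: (fsubs_ch Hs Hy) => b [Hb R]. exists b; split => //. exact: Hinc. }
move=> ss' [Hs' Hinc']. exists ss'; split => //.
- move/ne_inl: Hne => [y Hy]. apply/ne_inl. exists y; exact: Hinc'.
- exact: IH Hle Hinc'.
Qed.

Lemma olt_iff a L : olt a L <-> exists m, m <> [::] /\ (forall y, inl y m -> ch L y) /\ ole a m.
Proof.
split.
- case=> ss [Hs Hne Hle]. exists (flatten ss); split => //; split => //.
  move=> y; exact: fsubs_ch Hs.
- case=> m [Hne [Hch Hle]]. case: (build Hch) => ss [Hs Hinc].
  exists ss; split => //.
  + move/ne_inl: Hne => [y Hy]. apply/ne_inl. exists y; exact: Hinc.
  + exact: ole_mono Hle Hinc.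
Qed.

Lemma olt_single a L y : ch L y -> ole a [:: y] -> olt a L.
Proof.
move=> Hc Hl. apply/olt_iff. exists [:: y]; split => //; split => //.
move=> z /= [<-|//]. done.
Qed.

Lemma collect M m :
  (forall y, inl y m -> exists my, my <> [::] /\ (forall z, inl z my -> ch M z) /\ ole y my) ->
  exists m', (forall z, inl z m' -> ch M z) /\ (forall y, inl y m -> ole y m') /\ (m <> [::] -> m' <> [::]).
Proof.
elim: m => [|x m IH] H.
- exists [::]; split => //.
- case: IH. { move=> y Hy; apply: H; by right. }
  move=> m' [H1 [H2 _]]. case: (H x). { by left. }
  move=> mx [Hne [Hc Hl]]. exists (mx ++ m'); split; [|split].
  + move=> z /inl_cat [] ?; [exact: Hc|exact: H1].
  + move=> y /= [<-|Hy].
    * apply: ole_mono Hl _ => z Hz; apply/inl_cat; by left.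
    * apply: ole_mono (H2 _ Hy) _ => z Hz; apply/inl_cat; by right.
  + move=> _. by case: mx Hne {Hc Hl}.
Qed.

Lemma ole_trans a L M : ole a L -> (forall x, inl x L -> ole x M) -> ole a M.
Proof.
elim: a L M => [//|c f IH] L M H HLM i.
move: (H i) => /olt_iff [m [Hne [Hch Hle]]].
case: (collect (M:=M) (m:=m)).
{ move=> y Hy. case: (Hch y Hy) => b [Hb [c' [f' [j [Eb Ey]]]]]. subst.
  move: (HLM _ Hb) => /= /(_ j) /olt_iff. done. }
move=> m' [H1 [H2 H3]]. apply/olt_iff. exists m'; split; first exact: H3.
split => //. exact: IH Hle H2.
Qed.

Lemma child_le y x : (exists c (f : El c -> ord El) i, x = OS c f /\ y = f i) -> ole y [:: x].
Proof.
elim: y x => [//|d g IH] x Hx j. apply: (olt_single (y:=OS d g)).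
- exists x; split; [by left|done].
- apply: IH. by exists d, g, j.
Qed.

Lemma ole_refl a : ole a [:: a].
Proof.
elim: a => [//|c f IH] i. apply: (olt_single (y:=f i)) => //.
exists (OS c f); split; [by left|]. by exists c, f, i.
Qed.

Lemma olt_ole a L : olt a L -> ole a L.
Proof.
move/olt_iff => [m [_ [Hch Hle]]]. apply: ole_trans Hle _ => y Hy.
case: (Hch y Hy) => b [Hb Hc]. apply: ole_trans (child_le Hc) _.
move=> x /= [Ex|//]; subst x. apply: ole_mono (ole_refl b) _ => z /= [<-|//].
all: by [].
Qed.

Lemma tri (LEM : forall P : Prop, P \/ ~ P) a b : ole a [:: b] \/ olt b [:: a].
Proof.
elim: a b => [|c f IH] b; first by left.
case: (LEM (ole (OS c f) [:: b])) => Hab; first by left.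
case: (LEM (exists i, ~ olt (f i) [:: b])) => Hex; last first.
{ exfalso; apply: Hab => i. case: (LEM (olt (f i) [:: b])) => // Hn.
  exfalso; apply: Hex; by exists i. }
case: Hex => i0 Hi0. right. apply: (olt_single (y:=f i0)).
{ exists (OS c f); split; [by left|]. by exists c, f, i0. }
case: b Hab Hi0 => [//|d g] Hab Hi0 j.
case: (IH i0 (g j)) => // H. exfalso; apply: Hi0.
apply: (olt_single (y:=g j)) => //. exists (OS d g); split; [by left|]. by exists d, g, j.
Qed.

End S.

Theorem corollary3p20 (C : Type) (El : C -> Type) (cnat : C) (cfin : nat -> C)
    (hF : index_family El cnat cfin)
    (LEM : forall P : Prop, P \/ ~ P)
    (alpha : ord El) (halpha : ~ oeq alpha O0) :
  (exists beta : ord El, oeq alpha (OS (cfin 1) (fun _ => beta)))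
  \/ ((forall gamma : ord El, olt gamma [:: alpha] -> ole gamma [:: alpha])
      /\ (forall delta : ord El,
            (forall gamma : ord El, olt gamma [:: alpha] -> ole gamma [:: delta]) ->
            ole alpha [:: delta])).
Proof.
case: (LEM (forall delta : ord El,
            (forall gamma : ord El, olt gamma [:: alpha] -> ole gamma [:: delta]) ->
            ole alpha [:: delta])) => HP.
{ right; split => //. move=> g; exact: olt_ole. }
case: (LEM (exists delta : ord El,
   (forall gamma : ord El, olt gamma [:: alpha] -> ole gamma [:: delta]) /\ ~ ole alpha [:: delta])) => Hd; last first.
{ exfalso; apply: HP => delta H. case: (LEM (ole alpha [:: delta])) => // Hn.
  exfalso; apply: Hd; by exists delta. }
case: Hd => delta [Hd Hn].
clear HP. case: alpha halpha Hd Hn => [|c f] Ha Hd Hn; first by exfalso; apply: Ha.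
case: (LEM (exists i, ~ olt (f i) [:: delta])) => Hex; last first.
{ exfalso; apply: Hn => i. case: (LEM (olt (f i) [:: delta])) => // Hn'.
  exfalso; apply: Hex; by exists i. }
case: Hex => i0 Hi0.
have Hdl : ole delta [:: f i0] by case: (tri LEM delta (f i0)).
have Hch : forall i, ch [:: OS c f] (f i).
{ move=> i; exists (OS c f); split; [by left|]. by exists c, f, i. }
case: hF => _ hfin _ _ _. case: (hfin 1) => h [g _].
left; exists (f i0); split.
- move=> i. apply: (olt_single (y:=f i0)).
  + exists (OS (cfin 1) (fun _ => f i0)); split; [by left|].
    by exists (cfin 1), (fun _ => f i0), (g ord0).
  + apply: ole_trans (Hd (f i) (olt_single (Hch i) (ole_refl _))) _.
    by move=> x /= [<-|].
- move=> j. exact: olt_single (Hch i0) (ole_refl _).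
Qed.
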